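(* Let $\langle\theta\rangle:=B_+/B_1$, where $B_1=\langle\eta,\xi,\xi_L\rangle$. Then $HH^n_{(1-n)}(B,\langle\theta\rangle)\cong k$ for $n\in\{1,2\}$ and $0$ otherwise; $HH^n_{(2-n)}(B,\langle\theta\rangle)\cong k$ for $n\in\{5,6\}$ and $0$ otherwise; $HH^n_{(3-n)}(B,\langle\theta\rangle)\cong k$ for $n\in\{9,10\}$ and $0$ otherwise; $HH^n_{(4-n)}(B,\langle\theta\rangle)\cong k$ for $n\in\{13,14\}$ and $0$ otherwise.
   Context: Let $k$ be a field with $\operatorname{char}k\neq2,3$. Let $B$ be the graded $k$-algebra with $k$-basis $\mathrm{id}_L,\mathrm{id}_{\mathcal O},\theta$ (degree $0$) and $\eta,\xi,\xi_L$ (degree $1$), whose only nonzero products of basis elements are $\mathrm{id}_L\mathrm{id}_L=\mathrm{id}_L$, $\mathrm{id}_{\mathcal O}\mathrm{id}_{\mathcal O}=\mathrm{id}_{\mathcal O}$, $\mathrm{id}_L\xi_L=\xi_L\mathrm{id}_L=\xi_L$, $\mathrm{id}_{\mathcal O}\xi=\xi\mathrm{id}_{\mathcal O}=\xi$, $\mathrm{id}_L\eta=\eta\,\mathrm{id}_{\mathcal O}=\eta$, $\mathrm{id}_{\mathcal O}\theta=\theta\,\mathrm{id}_L=\theta$, $\theta\eta=\xi$, $\eta\theta=\xi_L$. Let $R=k\langle\mathrm{id}_L,\mathrm{id}_{\mathcal O}\rangle$, $B_+=\langle\theta,\eta,\xi,\xi_L\rangle$, $B=R\oplus B_+$; tensor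 products are over $R$. $B_1=\langle\eta,\xi,\xi_L\rangle$ is a sub-bimodule of $B_+$. For a graded $B$-bimodule $M$, the reduced Hochschild complex is $C^n(B,M)=\operatorname{Hom}_{R\text{-}R}(B_+^{\otimes_R n},M)$ with $\delta(\phi)(a_0,\dots,a_n)=a_0\phi(a_1,\dots,a_n)+\sum_{i=1}^n(-1)^i\phi(a_0,\dots,a_{i-1}a_i,\dots,a_n)+(-1)^{n+1}\phi(a_0,\dots,a_{n-1})a_n$; $HH^n_{(m)}(B,M)$ is the cohomology of the subcomplex of cochains homogeneous of internal degree $m$ ($\deg\phi(x)=\deg x+m$). *)

(* Defs.v *)
From HB Require Import structures.
From mathcomp Require Import all_boot all_order all_algebra.
Set Implicit Arguments. Unset Strict Implicit. Unset Printing Implicit Defensive.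
Import Order.TTheory GRing.Theory Num.Theory.
Local Open Scope ring_scope.

(* Vertices = the two orthogonal idempotents of R = k<id_L, id_O>. *)
Inductive vtx := VL | VO.
Definition vtx_code (v : vtx) : bool := if v is VL then true else false.
Definition vtx_decode (b : bool) : vtx := if b then VL else VO.
Lemma vtx_codeK : cancel vtx_code vtx_decode. Proof. by case. Qed.
HB.instance Definition _ := Finite.copy vtx (can_type vtx_codeK).

(* Basis of B_+ : theta, eta, xi, xi_L. *)
Inductive bas := th | et | xi | xiL.
Definition bas_code (a : bas) : 'I_4 :=
  match a with th => inord 0 | et => inord 1 | xi => inord 2 | xiL => inord 3 end.
Definition bas_decode (i : 'I_4) : bas :=
  match val i with 0 => th | 1 => et | 2 => xi | _ => xiL end.
Lemma bas_codeK : cancel bas_code bas_decode.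
Proof. by case; rewrite /bas_decode /= inordK. Qed.
HB.instance Definition _ := Finite.copy bas (can_type bas_codeK).

(* x = id_(lft x) x id_(rgt x) *)
Definition lft (a : bas) : vtx :=
  match a with th => VO | et => VL | xi => VO | xiL => VL end.
Definition rgt (a : bas) : vtx :=
  match a with th => VL | et => VO | xi => VO | xiL => VL end.
Definition degb (a : bas) : nat := if a is th then 0 else 1.
(* product of basis elements of B_+ (None = 0) *)
Definition mulb (a b : bas) : option bas :=
  match a, b with th, et => Some xi | et, th => Some xiL | _, _ => None end.

(* walk through a tensor a_1 (x)_R ... (x)_R a_n; None if the tensor is 0 *)
Fixpoint walk (v : vtx) (s : seq bas) : option vtx :=
  if s is a :: s' then (if lft a == v then walk (rgt a) s' else None) else Some v.

(* basis tensors of B_+^{(x)_R n} on which an R-R-bimodule map to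
   M = <theta> = id_O M id_L can be non-zero, and of internal degree d
   with d + m = 0 (deg theta-bar = 0) *)
Definition admissible (n : nat) (m : int) (t : n.-tuple bas) : bool :=
  (walk VO t == Some VL) && ((sumn (map degb t))%:Z + m == 0).

Definition Tb (n : nat) (m : int) := {t : n.-tuple bas | admissible m t}.

(* homogeneous cochains of degree m: C^n_(m)(B, <theta>) *)
Definition Coch (k : fieldType) (n : nat) (m : int) := {ffun Tb n m -> k^o}.

(* extension by zero (R-R-linearity / grading) to all basis tensors *)
Definition ext (k : fieldType) n m (phi : Coch k n m) (t : n.-tuple bas) : k :=
  if insub t is Some u then phi u else 0.

(* quotient map B_+ -> B_+/B_1 = k theta-bar, on basis elements / zero *)
Definition projM (k : fieldType) (o : option bas) : k :=
  if o is Some th then 1 else 0.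

(* merge positions i-1 and i (1 <= i <= n) of an (n+1)-tuple *)
Definition merge_at n (t : n.+1.-tuple bas) (i : nat) : option (seq bas) :=
  match mulb (nth th t i.-1) (nth th t i) with
  | Some c => Some (take i.-1 t ++ c :: drop i.+1 t)
  | None => None
  end.

Definition ext_seq (k : fieldType) n m (phi : Coch k n m) (o : option (seq bas)) : k :=
  match o with
  | Some s => if (insub s : option (n.-tuple bas)) is Some u then ext phi u else 0
  | None => 0
  end.

Definition delta_fun (k : fieldType) n m (phi : Coch k n m) : Coch k n.+1 m :=
  [ffun u : Tb n.+1 m =>
     let t := val u in
     projM k (mulb (thead t) th) * ext phi [tuple of behead t]
     + \sum_(1 <= i < n.+1) (-1) ^+ i * ext_seq phi (merge_at t i)
     + (-1) ^+ n.+1 * (ext phi [tuple of belast (thead t) (behead t)]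
                       * projM k (mulb th (last (thead t) (behead t))))].

Definition delta (k : fieldType) n m : 'Hom(Coch k n m, Coch k n.+1 m) :=
  linfun (@delta_fun k n m).

Definition HHdim (k : fieldType) (n : nat) (m : int) : nat :=
  (\dim (lker (delta k n m)) -
   match n with 0 => 0 | n'.+1 => \dim (limg (delta k n' m)) end)%N.

(* Main.v *)
Require Import Defs.
From HB Require Import structures.
From mathcomp Require Import all_boot all_order all_algebra.
From mathcomp Require Import ring lra zify.
Import GRing.Theory.
Local Open Scope ring_scope.

Section Abs.
Variables (K : fieldType) (C0 C1 C2 : vectType K).
Variables (d0 : 'Hom(C0, C1)) (d1 : 'Hom(C1, C2)).
Hypothesis dd0 : forall x, d1 (d0 x) = 0.

Lemma imker : (limg d0 <= lker d1)%VS.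
Proof. by apply/subvP => y /memv_imgP [x _ ->]; rewrite memv_ker dd0. Qed.

Lemma dimA : (forall x, d1 x = 0 -> exists y, x = d0 y) ->
  \dim (lker d1) = \dim (limg d0).
Proof.
move=> H; congr (\dim _); apply/eqP; rewrite eqEsubv imker andbT.
apply/subvP => x; rewrite memv_ker => /eqP /H [y ->].
by apply: memv_img; rewrite memvf.
Qed.

Lemma dimB (z : C1) (lam : C1 -> K) :
  d1 z = 0 -> lam z = 1 -> (forall y, lam (d0 y) = 0) ->
  (forall x, d1 x = 0 -> exists y c, x = d0 y + c *: z) ->
  \dim (lker d1) = (\dim (limg d0) + 1)%N.
Proof.
move=> dz lz l0 H.
have zn : z \notin limg d0.
  apply/negP => /memv_imgP [y _ ey]; move: lz; rewrite ey l0 => /eqP.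
  by rewrite eq_sym oner_eq0.
have z0 : z != 0 by apply: contraNneq zn => ->; rewrite mem0v.
have -> : lker d1 = (limg d0 + <[z]>)%VS.
  apply/eqP; rewrite eqEsubv; apply/andP; split.
    apply/subvP => x; rewrite memv_ker => /eqP /H [y [c ->]].
    apply: memv_add; first by apply: memv_img; rewrite memvf.
    by apply/vlineP; exists c.
  rewrite subv_add imker /=; apply/subvP => x /vlineP [c ->].
  by rewrite memv_ker linearZ /= dz scaler0.
rewrite dimv_disjoint_sum ?dim_vline ?z0 //.
apply/eqP; rewrite -subv0; apply/subvP => x /memv_capP [xi /vlineP [c ex]].
rewrite memv0; apply/eqP; move: xi; rewrite ex; case: (eqVneq c 0) => [-> | c0].
  by rewrite scale0r.
move=> /(memvZ c^-1); rewrite scalerA mulVf // scale1r => zi.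
by rewrite zi in zn.
Qed.
End Abs.

Section Words.
Variable k : comRingType.
Implicit Types (f g : seq bas -> k) (w u v : seq bas).

Definition mrg f x u : k :=
  match u with y :: u' => (if mulb x y is Some c then f (c :: u') else 0) | [::] => 0 end.
Fixpoint dd f w : k :=
  match w with [::] => 0 | x :: u => - mrg f x u - dd (fun v => f (x :: v)) u end.

Lemma mrg_ext f g x u : f =1 g -> mrg f x u = mrg g x u.
Proof. by move=> e; case: u => //= y u; case: mulb. Qed.

Lemma dd_ext f g w : f =1 g -> dd f w = dd g w.
Proof.
elim: w f g => [|x u IH] f g e //=; rewrite (IH _ (fun v => g (x :: v))) ?(mrg_ext _ _ x u e) //.

Qed.

Lemma dd0 w : dd (fun _ => 0) w = 0.
Proof.
elim: w => [|x u IH] //=; rewrite IH.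
case: u {IH} => [|y u] /=; last case: mulb => [c|] /=; by rewrite ?oppr0 ?addr0 ?subr0.
Qed.

Lemma ddB f g w : dd (fun v => f v - g v) w = dd f w - dd g w.
Proof.
elim: w f g => [|x u IH] f g /=; first by rewrite subr0.
rewrite IH; case: u {IH} => [|y u] /=; [|case: mulb => [c|] /=]; ring.
Qed.

Lemma ddN f w : dd (fun v => - f v) w = - dd f w.
Proof. by rewrite (dd_ext (fun v => - f v) (fun v => 0 - f v)) ?ddB ?dd0 ?sub0r // => v; rewrite sub0r. Qed.

Lemma dd_dd f w : dd (dd f) w = 0.
Proof.
elim: w f => [|x u IH] f //=.
rewrite ddB IH subr0 ddN opprK.
case: u {IH} => [|y u] /=; first by rewrite oppr0 add0r.
case: x => //; case: y => //=; rewrite ?oppr0 ?add0r ?dd0 //;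
  case: u => [|z u] /=; rewrite ?oppr0 ?subr0 ?add0r //;
  try (case: z => /=; rewrite ?oppr0 ?subr0 ?add0r //); ring.
Qed.

Definition c2 (a c : bas) (p : bool * seq bas) := (p.1, a :: c :: p.2).
Fixpoint h w : seq (bool * seq bas) :=
  match w with
  | [::] => [::]
  | xi :: u => (true, th :: et :: u) :: (if u is th :: u' then map (c2 th xiL) (h u') else [::])
  | xiL :: u => (true, et :: th :: u) :: (if u is et :: u' then map (c2 et xi) (h u') else [::])
  | th :: xiL :: u => map (c2 th xiL) (h u)
  | et :: xi :: u => map (c2 et xi) (h u)
  | _ => [::]
  end.
Definition sgn (b : bool) : k := if b then -1 else 1.
Definition Shl f (l : seq (bool * seq bas)) := foldr (fun p acc => sgn p.1 * f p.2 + acc) 0 l.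
Definition Sh f w := Shl f (h w).
Lemma Shl_map f a c l : Shl f (map (c2 a c) l) = Shl (fun v => f (a::c::v)) l.
Proof. by elim: l => //= p l ->. Qed.
Lemma Shl_ext f g l : f =1 g -> Shl f l = Shl g l.
Proof. by move=> e; elim: l => //= p l ->; rewrite e. Qed.
Lemma ShlB f g l : Shl (fun v => f v - g v) l = Shl f l - Shl g l.
Proof. elim: l => /= [|p l ->]; [by rewrite subr0| ring]. Qed.
Definition cons2 (a c : bas) v := a :: c :: v.
Fixpoint piw w : option (seq bas) :=
  match w with
  | [::] => Some [::]
  | [:: th] => Some [:: th]
  | [:: et] => Some [:: et]
  | xi :: th :: u => omap (cons2 th xiL) (piw u)
  | xiL :: et :: u => omap (cons2 et xi) (piw u)
  | th :: xiL :: u => omap (cons2 th xiL) (piw u)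
  | et :: xi :: u => omap (cons2 et xi) (piw u)
  | _ => None
  end.
Definition Pi f w := if piw w is Some v then f v else 0.
Fixpoint ch w := match w with x :: ((y :: _) as u) => (rgt x == lft y) && ch u | _ => true end.

Lemma mrg_xi g v : mrg g xi v = 0. Proof. by case: v => // -[]. Qed.
Lemma mrg_xiL g v : mrg g xiL v = 0. Proof. by case: v => // -[]. Qed.
Lemma Sh_ext f g w : f =1 g -> Sh f w = Sh g w.
Proof. exact: Shl_ext. Qed.
Lemma Sh12a f v : Sh f (th::xiL::v) = Sh (fun w => f (th::xiL::w)) v.
Proof. by rewrite /Sh /= Shl_map. Qed.
Lemma Sh12b f v : Sh f (et::xi::v) = Sh (fun w => f (et::xi::w)) v.
Proof. by rewrite /Sh /= Shl_map. Qed.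
Lemma dd12a f v : dd f (th::xiL::v) = dd (fun w => f (th::xiL::w)) v.
Proof. by rewrite /= mrg_xiL; ring. Qed.
Lemma dd12b f v : dd f (et::xi::v) = dd (fun w => f (et::xi::w)) v.
Proof. by rewrite /= mrg_xi; ring. Qed.
Lemma Pi12a f v : Pi f (th::xiL::v) = Pi (fun w => f (th::xiL::w)) v.
Proof. by rewrite /Pi /=; case: piw. Qed.
Lemma Pi12b f v : Pi f (et::xi::v) = Pi (fun w => f (et::xi::w)) v.
Proof. by rewrite /Pi /=; case: piw. Qed.

Lemma dd_cons f x u : dd f (x::u) = - mrg f x u - dd (fun v => f (x::v)) u.
Proof. by []. Qed.
Lemma Sh21a f v : Sh f (xi::th::v) = Sh (fun w => f (th::xiL::w)) v - f [:: th, et, th & v].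
Proof. by rewrite /Sh /= Shl_map /sgn; ring. Qed.
Lemma Sh21b f v : Sh f (xiL::et::v) = Sh (fun w => f (et::xi::w)) v - f [:: et, th, et & v].
Proof. by rewrite /Sh /= Shl_map /sgn; ring. Qed.
Lemma Pi21a f v : Pi f (xi::th::v) = Pi (fun w => f (th::xiL::w)) v.
Proof. by rewrite /Pi /=; case: piw. Qed.
Lemma Pi21b f v : Pi f (xiL::et::v) = Pi (fun w => f (et::xi::w)) v.
Proof. by rewrite /Pi /=; case: piw. Qed.

Lemma Sh22a f v : Sh f (xi::xi::v) = - f [:: th, et, xi & v].
Proof. by rewrite /Sh /= /sgn; ring. Qed.
Lemma Sh22b f v : Sh f (xiL::xiL::v) = - f [:: et, th, xiL & v].
Proof. by rewrite /Sh /= /sgn; ring. Qed.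

Lemma homot_n n : forall w f, (size w <= n)%N -> ch w ->
  dd (Sh f) w + Sh (dd f) w = f w - Pi f w.
Proof.
elim: n => [|n IH] [|x [|y u]] f //=; rewrite ?ltnS => sz chw.
- by rewrite /Sh /Pi /=; ring.
- by rewrite /Sh /Pi /=; ring.
- case: x {chw} => /=; rewrite /Sh /Pi /=; ring.
have chu : ch u by case: u chw {sz} => // ? ? /andP[_ /andP[]].
have IHu := IH u _ (ltnW sz) chu.
case: x chw; case: y => chw; try by case/andP: chw.
- (* th et *)
  rewrite /Sh /Pi /= dd0 {IHu chu sz}.
  case: u chw => [|z u] chw /=; first by ring.
  case: z chw => chw /=; ring.
- (* th xiL *)
  rewrite /= mrg_xiL (dd_ext _ _ u (Sh12a f)) Sh12a (Sh_ext _ _ u (dd12a f)) Pi12a -IHu; ring.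
- (* et th *)
  rewrite /Sh /Pi /= dd0 {IHu chu sz}.
  case: u chw => [|z u] chw /=; first by ring.
  case: z chw => chw /=; ring.
- (* et xi *)
  rewrite /= mrg_xi (dd_ext _ _ u (Sh12b f)) Sh12b (Sh_ext _ _ u (dd12b f)) Pi12b -IHu; ring.
- (* xi th *)
  cbn [mulb].
  rewrite (dd_ext _ _ u (Sh21a f)) ddB Sh21a (Sh_ext _ _ u (dd12a f)) Pi21a.
  rewrite -[dd (Sh _) u](addrK (Sh (dd (fun w => f (th :: xiL :: w))) u)) IHu.
  rewrite !dd_cons; cbv beta; cbn [mrg mulb].
  case: u {IHu chu sz} chw => [|z u] chw; cbn [mrg mulb]; first by ring.
  case: z chw => chw; cbn [mrg mulb]; rewrite ?Sh21a ?Sh22a; ring.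
- (* xi xi *)
  cbn [mulb].
  rewrite mrg_xi (dd_ext _ _ u (Sh22a f)) ddN Sh22a !dd_cons; cbv beta; cbn [mrg mulb].
  rewrite !mrg_xi /Pi /=; ring.
- (* xiL et *)
  cbn [mulb].
  rewrite (dd_ext _ _ u (Sh21b f)) ddB Sh21b (Sh_ext _ _ u (dd12b f)) Pi21b.
  rewrite -[dd (Sh _) u](addrK (Sh (dd (fun w => f (et :: xi :: w))) u)) IHu.
  rewrite !dd_cons; cbv beta; cbn [mrg mulb].
  case: u {IHu chu sz} chw => [|z u] chw; cbn [mrg mulb]; first by ring.
  case: z chw => chw; cbn [mrg mulb]; rewrite ?Sh21b ?Sh22b; ring.
- (* xiL xiL *)
  cbn [mulb].
  rewrite mrg_xiL (dd_ext _ _ u (Sh22b f)) ddN Sh22b !dd_cons; cbv beta; cbn [mrg mulb].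
  rewrite !mrg_xiL /Pi /=; ring.
Qed.
End Words.
Arguments dd {k}. Arguments mrg {k}. Arguments Sh {k}. Arguments Shl {k}. Arguments Pi {k}. Arguments sgn {k}.

Definition degs (w : seq bas) := sumn (map degb w).

Lemma h_prop n w p : (size w <= n)%N -> p \in h w ->
  size p.2 = (size w).+1 /\ (forall s, walk s p.2 = walk s w) /\ degs p.2 = degs w.
Proof.
elim: n w p => [|n IH] [|x [|y u]] p //= sz.
- by case: x => //=; rewrite inE => /eqP -> /=.
- have hu : (size u <= n)%N by rewrite ltnS in sz; apply: ltnW.
  have key : forall a c q, q \in h u -> forall s, walk s (a :: c :: q.2) = walk s (a :: c :: u).
    by move=> a c q qi s /=; have [_ [W _]] := IH _ _ hu qi; rewrite W.
  have keyS : forall q, q \in h u -> size q.2 = (size u).+1.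
    by move=> q qi; have [S _] := IH _ _ hu qi.
  have keyD : forall q, q \in h u -> degs q.2 = degs u.
    by move=> q qi; have [_ [_ D]] := IH _ _ hu qi.
  case: x; case: y => //=; rewrite ?inE;
   try (by move=> /eqP -> /=);
   try (case/orP; [by move=> /eqP -> /=|]);
   move/mapP => [q qi ->] /=; rewrite (keyS _ qi); split => //;
   have [_ [W D]] := IH _ _ hu qi; split;
   try (by move=> s; rewrite W); by move: D; rewrite /degs /=; lia.
Qed.

Definition is1 (a : bas) := match a with th | et => true | _ => false end.
Fixpoint alt12 v := match v with
  | [::] => true | [:: a] => is1 a | a :: b :: v' => is1 a && ~~ is1 b && alt12 v' end.
Definition sz1 (a : bas) : nat := if is1 a then 1 else 2.
Definition sumsz v := sumn (map sz1 v).

Lemma pi_prop n w v : (size w <= n)%N -> piw w = Some v ->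
  [/\ size v = size w, (forall s, walk s v = walk s w), degs v = degs w & alt12 v].
Proof.
elim: n w v => [|n IH] [|x [|y u]] v //= sz.
- by case=> <-.
- by case=> <-.
- by case: x => //= -[<-].
- have hu : (size u <= n)%N by rewrite ltnS in sz; apply: ltnW.
  case: x; case: y => //=; case E: (piw u) => [q|] //= [<-] /=;
  have [S W D A] := IH _ _ hu E; rewrite S A; split => //;
  try (by move=> s; rewrite W); by move: D; rewrite /degs /=; lia.
Qed.

Lemma alt_sum v : alt12 v -> (2 * sumsz v + odd (size v) = 3 * size v)%N.
Proof.
move: {2}(size v) (leqnn (size v)) => n; elim: n v => [|n IH] [|a [|b v]] //= sz.
- by case: a.
- case/andP => /andP [a1 b2] av.
  have := IH v; rewrite /sumsz /= in sz *; move=> /(_ (ltnW sz) av).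
  by case: a a1; case: b b2 => //= _ _; rewrite /sz1 /=; lia.
Qed.

Lemma walk_sum s e v : walk s v = Some e ->
  (sumsz v + (s == VL) = 2 * degs v + (e == VL))%N.
Proof.
elim: v s => [|a v IH] s /=; first by case=> ->; rewrite /sumsz /degs /= muln0.
case: eqP => // <- /IH; rewrite /sumsz /degs /=.
by case: a => /=; case: (e == VL) => /=; rewrite /sz1 /=; lia.
Qed.

Lemma alt_uniq v1 v2 s : alt12 v1 -> alt12 v2 -> size v1 = size v2 ->
  walk s v1 != None -> walk s v2 != None -> v1 = v2.
Proof.
move: {2}(size v1) (leqnn (size v1)) => n.
elim: n v1 v2 s => [|n IH] [|a [|b v1]] [|a' [|b' v2]] s //= sz.
- by case: a; case: a'; case: s.
- move=> /andP [/andP [a1 b1] A1] /andP [/andP [a1' b1'] A2] [S].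
  case: a a1; case: a' a1' => // _ _; case: s => //=;
  case: b b1; case: b' b1' => //= _ _ W1 W2; congr [:: _, _ & _];
  apply: (IH _ _ _ (ltnW sz) A1 A2 S W1 W2).
Qed.

Lemma walk_ch s w : walk s w != None -> ch w.
Proof.
elim: w s => [|x u IH] s //=; case: (lft x == s) => // W.
have := IH _ W; case: u W {IH} => //= y u.
by case E: (lft y == rgt x) => //= _ H; rewrite (eqP E) eqxx H.
Qed.

Lemma dd_congr (k : comRingType) s0 (f g : seq bas -> k) w :
  (forall v, (size v).+1 = size w -> walk s0 v = walk s0 w -> degs v = degs w -> f v = g v) ->
  dd f w = dd g w.
Proof.
elim: w s0 f g => [|x u IH] s0 f g H //=.
congr (- _ - _).
  case: u H {IH} => //= y u H.
  case E: (mulb x y) => [c|] //; apply: H => //=.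
    by case: x y E => -[] //= [<-].
  by rewrite /degs /=; case: x y E => -[] //= [<-].
apply: (IH (if lft x == s0 then rgt x else s0)) => v S W D; apply: H => /=.
- by rewrite S.
- by case: (lft x == s0) W => //.
- by rewrite /degs /= -/(degs v) -/(degs u) D.
Qed.

Section Bridge.
Variable k : fieldType.

Definition Tm (g : seq bas -> k) (s : seq bas) (i : nat) : k :=
  (-1) ^+ i * (if mulb (nth th s i.-1) (nth th s i) is Some c
               then g (take i.-1 s ++ c :: drop i.+1 s) else 0).

Lemma sum_dd (g : seq bas -> k) s :
  \sum_(1 <= i < size s) Tm g s i = dd g s.
Proof.
elim: s g => [|x u IH] g; first by rewrite big_geq.
case: u IH => [|y u] IH; first by rewrite big_geq //= oppr0 addr0.
rewrite dd_cons -(IH (fun v => g (x :: v))) big_nat_recl //.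
congr (_ + _).
  by rewrite /Tm /= expr1 drop0; case: mulb => [c|] /=; rewrite ?mulN1r ?mulr0 ?oppr0.
rewrite -sumrN; apply: eq_big_nat => -[|j] //= _.
rewrite /Tm /= exprS; case: mulb => [c|] /=; rewrite ?mulr0 ?oppr0 // mulN1r mulNr; reflexivity.
Qed.

Definition F n m (phi : Coch k n m) (s : seq bas) : k := ext_seq phi (Some s).
Arguments F {n m}.

Lemma delta_dd n m (phi : Coch k n m) (u : Tb n.+1 m) :
  delta_fun phi u = dd (F phi) (val (val u)).
Proof.
rewrite ffunE.
have E1 : forall b, projM k (mulb b th) = 0 by case.
have E2 : forall b, projM k (mulb th b) = 0 by case.
rewrite /= E1 E2.
rewrite mul0r add0r mulr0 [X in _ + X]mulr0 addr0 -sum_dd size_tuple.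
apply: eq_big_nat => i _; rewrite /Tm /merge_at.
by case: mulb.
Qed.

Definition adms (m : int) (s : seq bas) :=
  (walk VO s == Some VL) && ((sumn (map degb s))%:Z + m == 0).

Lemma F_val n m (phi : Coch k n m) (u : Tb n m) : F phi (val (val u)) = phi u.
Proof. by rewrite /F /= valK /ext valK. Qed.

Lemma F_spec n m v : size v = n -> adms m v -> exists u : Tb n m, val (val u) = v.
Proof.
move=> S A; have S' : size v == n by rewrite S.
have A' : admissible m (Tuple S') by [].
by exists (exist _ (Tuple S') A').
Qed.

Arguments F_spec {n m v}. Arguments F_val {n m}.
Lemma Tb_adms n m (u : Tb n m) : size (val (val u)) = n /\ adms m (val (val u)).
Proof. by split; [rewrite size_tuple | exact: (valP u)]. Qed.

Lemma Sh_congr (f g : seq bas -> k) w : (forall p, p \in h w -> f p.2 = g p.2) -> Sh f w = Sh g w.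
Proof.
rewrite /Sh; elim: (h w) => //= p l IH H.
by rewrite H ?inE ?eqxx // IH // => q qi; apply: H; rewrite inE qi orbT.
Qed.

Definition sh n m (phi : Coch k n.+1 m) : Coch k n m := [ffun u => Sh (F phi) (val (val u))].
Definition Pm n m (phi : Coch k n m) : Coch k n m := [ffun u => Pi (F phi) (val (val u))].
Arguments sh {n m}. Arguments Pm {n m}.

Lemma homot_coch n m (phi : Coch k n.+1 m) (u : Tb n.+1 m) :
  delta_fun (sh phi) u + sh (delta_fun phi) u = phi u - Pm phi u.
Proof.
have [S A] := Tb_adms _ _ u; set w := val (val u) in S A *.
have /andP [/eqP W /eqP D] := A.
rewrite delta_dd (@dd_congr _ VO _ (Sh (F phi))); last first.
  move=> v Sv Wv Dv.
  have Sv' : size v = n by move: Sv; rewrite S => -[].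
  have Av : adms m v by rewrite /adms Wv W eqxx /=; move: Dv; rewrite /degs => ->; rewrite D.
  have [u' <-] := F_spec Sv' Av.
  by rewrite F_val ffunE.
rewrite ffunE (@Sh_congr _ (dd (F phi))); last first.
  move=> p pi; have [Sp [Wp Dp]] := @h_prop _ _ _ (leqnn _) pi.
  have Sp' : size p.2 = n.+2 by rewrite Sp S.
  have Ap : adms m p.2 by rewrite /adms Wp W eqxx /=; move: Dp; rewrite /degs => ->; rewrite D.
  have [u' <-] := F_spec Sp' Ap.
  by rewrite F_val delta_dd.
have chw : ch w by apply: (@walk_ch VO); rewrite W.
by rewrite (@homot_n _ (size w) w (F phi) (leqnn _) chw) ffunE F_val.
Qed.
End Bridge.
Arguments F_spec {n m v}.
Arguments F {k n m}. Arguments sh {k n m}. Arguments Pm {k n m}. Arguments F_val {k n m}.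

Lemma dd_lin (k : comRingType) (a : k) (f g : seq bas -> k) w :
  dd (fun v => a * f v + g v) w = a * dd f w + dd g w.
Proof.
elim: w f g => [|x u IH] f g /=; first by rewrite mulr0 addr0.
rewrite IH; case: u {IH} => [|y u] /=; [|case: mulb => [c|] /=]; ring.
Qed.

Section Lin.
Variable k : fieldType.

Lemma F_lin n m (a : k) (x y : Coch k n m) v :
  F (a *: x + y) v = a * F x v + F y v.
Proof.
rewrite /F /ext_seq; case: insub => [t|]; last by rewrite mulr0 addr0.
rewrite /ext; case: insub => [t'|]; last by rewrite mulr0 addr0.
by rewrite !ffunE.
Qed.

Lemma delta_fun_linear n m : linear (@delta_fun k n m).
Proof.
move=> a x y; apply/ffunP => u.
rewrite delta_dd [X in _ = X]ffunE [X in _ = X + _]ffunE !delta_dd.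
by rewrite (dd_ext _ _ _ _ (F_lin _ _ a x y)) dd_lin.
Qed.

HB.instance Definition _ n m := GRing.isLinear.Build k (Coch k n m) (Coch k n.+1 m) _
  (@delta_fun k n m) (delta_fun_linear n m).

Lemma deltaE n m x : delta k n m x = delta_fun x.
Proof. by rewrite /delta lfunE. Qed.

Lemma F0 n m v : F (0 : Coch k n m) v = 0.
Proof.
rewrite /F /ext_seq; case: insub => [t|] //.
by rewrite /ext; case: insub => [t'|] //; rewrite ffunE.
Qed.

Lemma sh0 n m : sh (0 : Coch k n.+1 m) = 0.
Proof.
apply/ffunP => u; rewrite !ffunE /Sh; elim: (h _) => //= p l ->.
by rewrite F0 mulr0 add0r.
Qed.

Lemma dd2 n m (phi : Coch k n m) : delta_fun (delta_fun phi) = 0.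
Proof.
apply/ffunP => u; rewrite [RHS]ffunE delta_dd.
have [S A] := Tb_adms _ _ u; set w := val (val u) in S A *.
have /andP [/eqP W /eqP D] := A.
rewrite (@dd_congr _ VO _ (dd (F phi))) ?dd_dd // => v Sv Wv Dv.
have Sv' : size v = n.+1 by move: Sv; rewrite S => -[].
have Av : adms m v by rewrite /adms Wv W eqxx /=; move: Dv; rewrite /degs => ->; rewrite D.
have [u' <-] := F_spec Sv' Av.
by rewrite F_val delta_dd.
Qed.

Lemma level_A n m : (forall u : Tb n.+1 m, piw (val (val u)) = None) -> HHdim k n.+1 m = 0%N.
Proof.
move=> Hp; rewrite /HHdim (@dimA _ _ _ _ (delta k n m) (delta k n.+1 m)) ?subnn //.
  by move=> x; rewrite !deltaE dd2.
move=> x; rewrite deltaE => dx; exists (sh x); rewrite deltaE.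
apply/ffunP => u; have := @homot_coch _ _ _ x u.
rewrite dx sh0 [X in _ + X = _]ffunE [Pm x u]ffunE /Pi Hp subr0 addr0 => <- //.
Qed.

Lemma Pm_dec n m (x : Coch k n.+1 m) :
  delta_fun x = 0 -> x = delta_fun (sh x) + Pm x.
Proof.
move=> dx; apply/ffunP => u; have := @homot_coch _ _ _ x u.
rewrite dx sh0 [X in _ + X = _]ffunE addr0 => E.
by rewrite [RHS]ffunE E subrK.
Qed.

Lemma homot_ffun n m (x : Coch k n.+1 m) :
  delta_fun (sh x) + sh (delta_fun x) = x - Pm x.
Proof. apply/ffunP => u; rewrite [LHS]ffunE [RHS]ffunE [X in _ = _ + X]ffunE; exact: homot_coch. Qed.

Lemma level_B n m (w0 : seq bas) :
  size w0 = n.+1 -> adms m w0 -> piw w0 = Some w0 -> (forall f : seq bas -> k, dd f w0 = 0) ->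
  (forall u : Tb n.+1 m, piw (val (val u)) = None \/ piw (val (val u)) = Some w0) ->
  (forall u : Tb n.+2 m, piw (val (val u)) = None) ->
  HHdim k n.+1 m = 1%N.
Proof.
move=> S0 A0 P0 D0 Hp Hq.
have [u0 U0] := F_spec S0 A0.
pose e : Coch k n.+1 m := [ffun u => if u == u0 then 1 else 0].
pose z := Pm e.
have Pmz : forall (x : Coch k n.+1 m) u, Pm x u = x u0 * z u.
  move=> x u; rewrite /z !ffunE /Pi.
  case: (Hp u) => ->; first by rewrite mulr0.
  by rewrite -U0 !F_val ffunE eqxx mulr1.
rewrite /HHdim (@dimB _ _ _ _ (delta k n m) (delta k n.+1 m) _ z (fun x => x u0)) ?addKn //.
- by move=> x; rewrite !deltaE dd2.
- rewrite deltaE.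
  have Ez : z = e - (delta_fun (sh e) + sh (delta_fun e)).
    by rewrite homot_ffun opprB addrC subrK.
  have Eq : delta_fun (sh (delta_fun e)) = delta_fun e.
    apply/ffunP => u; have := @homot_coch _ _ _ (delta_fun e) u.
    rewrite dd2 sh0 [X in _ + X = _]ffunE addr0 [Pm _ u]ffunE /Pi Hq subr0 => -> //.
  by rewrite Ez !linearB linearD /= dd2 Eq add0r subrr.
- by rewrite /= /z ffunE /Pi U0 P0 -U0 F_val ffunE eqxx.
- by move=> y; rewrite deltaE delta_dd U0 D0.
- move=> x; rewrite deltaE => dx; exists (sh x), (x u0).
  rewrite deltaE {1}(Pm_dec _ _ _ dx); congr (_ + _); apply/ffunP => u.
  by rewrite [RHS]ffunE Pmz.
Qed.
End Lin.

Lemma pi_arith n m (j : nat) (u : Tb n m) v : m = j%:Z - n%:Z ->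
  piw (val (val u)) = Some v -> (n + 2 + odd n = 4 * j)%N.
Proof.
move=> Em P.
have [S A] := Tb_adms _ _ u; set w := val (val u) in S A P *.
have /andP [/eqP W /eqP D] := A.
have [Sv Wv Dv Av] := @pi_prop (size w) w v (leqnn _) P.
have Ws : walk VO v = Some VL by rewrite Wv W.
have := walk_sum _ _ _ Ws; have := alt_sum _ Av.
rewrite Sv S Dv; move: D; rewrite Em /degs.
move: (sumn _) (sumsz v) => d s.
have E : n = (odd n + 2 * n./2)%N by rewrite -[n in LHS]odd_double_half mul2n.
case: (odd n) E => /= E; lia.
Qed.

Section Fin.
Variable k : fieldType.

Lemma HH0 m : HHdim k 0 m = 0%N.
Proof.
rewrite /HHdim subn0.
suff : (lker (delta k 0 m) <= 0)%VS by move/dimvS; rewrite dimv0 leqn0 => /eqP.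
apply/subvP => x _; rewrite memv0; apply/eqP/ffunP => u.
have [S A] := Tb_adms _ _ u; move: A; rewrite /adms.
by case: (val (val u)) S.
Qed.

Lemma HH_A n m (j : nat) : m = j%:Z - n.+1%:Z ->
  (n.+1 + 2 + odd n.+1 != 4 * j)%N -> HHdim k n.+1 m = 0%N.
Proof.
move=> Em N; apply: level_A => u.
case P: (piw _) => [v|] //.
by have := pi_arith _ _ _ _ _ Em P; move/eqP: N.
Qed.

Fixpoint nomerge (w : seq bas) := match w with
  | x :: ((y :: _) as u) => (mulb x y == None) && nomerge u | _ => true end.

Lemma nomerge_dd (f : seq bas -> k) w : nomerge w -> dd f w = 0.
Proof.
elim: w f => [|x u IH] f //= H.
rewrite IH; last by case: u H {IH} => // y u /andP[].
case: u H {IH} => [|y u] /=; first by rewrite oppr0 addr0.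
by case/andP => /eqP ->; rewrite oppr0 addr0.
Qed.

Lemma HH_B n m (j : nat) (w0 : seq bas) : m = j%:Z - n.+1%:Z ->
  (n.+2 + 2 + odd n.+2 != 4 * j.+1)%N ->
  size w0 = n.+1 -> adms m w0 -> piw w0 = Some w0 -> nomerge w0 -> alt12 w0 ->
  HHdim k n.+1 m = 1%N.
Proof.
move=> Em N S0 A0 P0 N0 Al0.
apply: (@level_B k n m w0 S0 A0 P0 (fun f => nomerge_dd f _ N0)).
- move=> u; case P: (piw _) => [v|]; [right|by left].
  have [S A] := Tb_adms _ _ u.
  have [Sv Wv Dv Av] := @pi_prop _ _ v (leqnn _) P.
  congr Some; apply: (@alt_uniq _ _ VO Av Al0); first by rewrite Sv S S0.
    by rewrite Wv; case/andP: A => /eqP ->.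
  by case/andP: A0 => /eqP ->.
- move=> u; case P: (piw _) => [v|] //.
  have Em' : m = j.+1%:Z - n.+2%:Z by rewrite Em; lia.
  by have := pi_arith _ _ _ _ _ Em' P; move/eqP: N.
Qed.
End Fin.

Lemma notin_arith n j : (0 < j)%N -> n \notin [:: (4 * j - 3)%N; (4 * j - 2)%N] ->
  (n + 2 + odd n != 4 * j)%N.
Proof.
move=> j0; rewrite !inE negb_or => /andP [/eqP N1 /eqP N2]; apply/eqP => E.
have E2 : n = (odd n + 2 * n./2)%N by rewrite -[n in LHS]odd_double_half mul2n.
by case: (odd n) E E2 => /= E E2; lia.
Qed.

Ltac doB j w :=
  apply: (@HH_B _ _ _ j w); [reflexivity | by [] | by [] | vm_compute; reflexivity
  | vm_compute; reflexivity | vm_compute; reflexivity | vm_compute; reflexivity].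
Ltac doA j H :=
  apply: (@HH_A _ _ _ j); [reflexivity | exact: (@notin_arith _ j isT H)].

Theorem mainTheorem8 (k : fieldType)
  (h2 : (2%:R : k) != 0) (h3 : (3%:R : k) != 0) (n : nat) :
  HHdim k n (1 - n%:Z) = (if n \in [:: 1; 2]%N then 1 else 0)%N /\
  HHdim k n (2 - n%:Z) = (if n \in [:: 5; 6]%N then 1 else 0)%N /\
  HHdim k n (3 - n%:Z) = (if n \in [:: 9; 10]%N then 1 else 0)%N /\
  HHdim k n (4 - n%:Z) = (if n \in [:: 13; 14]%N then 1 else 0)%N.
Proof.
case: n => [|n]; first by rewrite !HH0.
split; [|split; [|split]].
- case: (boolP (n.+1 \in [:: 1; 2]%N)) => H; last by doA 1%N H.
  move: H; rewrite !inE => /orP [/eqP [->]|/eqP [->]].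
  + by doB 1%N [:: th].
  + by doB 1%N [:: th; xiL].
- case: (boolP (n.+1 \in [:: 5; 6]%N)) => H; last by doA 2%N H.
  move: H; rewrite !inE => /orP [/eqP [->]|/eqP [->]].
  + by doB 2%N [:: th; xiL; et; xi; th].
  + by doB 2%N [:: th; xiL; et; xi; th; xiL].
- case: (boolP (n.+1 \in [:: 9; 10]%N)) => H; last by doA 3%N H.
  move: H; rewrite !inE => /orP [/eqP [->]|/eqP [->]].
  + by doB 3%N [:: th; xiL; et; xi; th; xiL; et; xi; th].
  + by doB 3%N [:: th; xiL; et; xi; th; xiL; et; xi; th; xiL].
- case: (boolP (n.+1 \in [:: 13; 14]%N)) => H; last by doA 4%N H.
  move: H; rewrite !inE => /orP [/eqP [->]|/eqP [->]].
  + by doB 4%N [:: th; xiL; et; xi; th; xiL; et; xi; th; xiL; et; xi; th].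
  + by doB 4%N [:: th; xiL; et; xi; th; xiL; et; xi; th; xiL; et; xi; th; xiL].
Qed.
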